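(* Let $L:\mathbb{R}^d\to\mathbb{R}^{\mathcal{Y}}_+$ be a polyhedral loss, $\ell:\mathcal{R}\to\mathbb{R}^{\mathcal{Y}}_+$ a discrete loss, and $\psi:\mathbb{R}^d\to\mathcal{R}$ a link. Then $(L,\psi)$ is calibrated with respect to $\ell$ if and only if there exists $\epsilon>0$ such that $\psi$ is $\epsilon$-separated with respect to $\mathrm{prop}[L]$ and $\mathrm{prop}[\ell]$.
   Context: $\mathcal{Y}$ is a finite label set, $\Delta_{\mathcal{Y}}$ the probability simplex on $\mathcal{Y}$, $\mathbb{R}^{\mathcal{Y}}_+$ the nonnegative orthant. A loss $L:\mathcal{R}\to\mathbb{R}^{\mathcal{Y}}_+$ has expected loss $\langle p,L(r)\rangle$; it is discrete if $\mathcal{R}$ is finite; $L:\mathbb{R}^d\to\mathbb{R}^{\mathcal{Y}}_+$ is polyhedral if each coordinate is a pointwise maximum of finitely many affine functions of $u$. For a loss whose expected loss attains its infimum for every $p$, $\mathrm{prop}[L](p)=\arg\min_r\langle p,L(r)\rangle$ (polyhedral and discrete losses have this property). $(L,\psi)$ is calibrated with respect to $\ell$ if for all $p\in\Delta_{\mathcal{Y}}$, $\inf_{u:\psi(u)\notin\mathrm{prop}[\ell](p)}\langle p,L(u)\rangle>\inf_{u\in\mathbb{R}^d}\langle p,L(u)\rangle$ (infimum over the empty set is $+\infty$). For properties $\Gamma:\Delta_{\mathcal{Y}}\rightrightarrows\mathbb{R}^d$, $\gamma:\Delta_{\mathcal{Y}}\rightrightarrows\mathcal{R}$, a link $\psi$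 is $\epsilon$-separated with respect to $\Gamma$ and $\gamma$ if for all $u\in\mathbb{R}^d$ and $p\in\Delta_{\mathcal{Y}}$ with $\psi(u)\notin\gamma(p)$ we have $d_\infty(u,\Gamma(p))\ge\epsilon$, where $d_\infty(u,A)=\inf_{a\in A}\|u-a\|_\infty$. *)

(* Defs.v *)
From HB Require Import structures.
From mathcomp Require Import all_boot all_order all_algebra.
From mathcomp Require Import classical_sets boolp reals constructive_ereal ereal.
Set Implicit Arguments. Unset Strict Implicit. Unset Printing Implicit Defensive.
Import Order.TTheory GRing.Theory Num.Theory.
Local Open Scope ring_scope.
Local Open Scope classical_set_scope.

Section Defs.
Variables (R : realType) (Y : finType).

Definition simplex (p : Y -> R) : Prop :=
  (forall y, 0 <= p y) /\ \sum_(y : Y) p y = 1.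

Definition exp_loss (Rep : Type) (L : Rep -> Y -> R) (p : Y -> R) (r : Rep) : R :=
  \sum_(y : Y) p y * L r y.

Definition nonneg_loss (Rep : Type) (L : Rep -> Y -> R) : Prop :=
  forall r y, 0 <= L r y.

(* polyhedral: each coordinate is a pointwise max of finitely many
   (at least one) affine functions of u *)
Definition polyhedral (d : nat) (L : 'rV[R]_d -> Y -> R) : Prop :=
  nonneg_loss L /\
  forall y : Y, exists (k : nat) (a : 'I_k.+1 -> 'rV[R]_d) (b : 'I_k.+1 -> R),
    forall u : 'rV[R]_d, (forall i, \sum_(j < d) a i 0 j * u 0 j + b i <= L u y) /\
              (exists i, L u y = \sum_(j < d) a i 0 j * u 0 j + b i).

Definition discrete_loss (Rep : finType) (l : Rep -> Y -> R) : Prop :=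
  nonneg_loss l.

Definition prop (Rep : Type) (L : Rep -> Y -> R) (p : Y -> R) : set Rep :=
  [set r | forall r', exp_loss L p r <= exp_loss L p r'].

(* calibration; ereal_inf of the empty set is +oo *)
Definition calibrated (d : nat) (Rep : Type) (L : 'rV[R]_d -> Y -> R)
    (psi : 'rV[R]_d -> Rep) (l : Rep -> Y -> R) : Prop :=
  forall p, simplex p ->
    (ereal_inf [set (exp_loss L p u)%:E | u in [set u | ~ prop l p (psi u)]]
     > ereal_inf [set (exp_loss L p u)%:E | u in [set: 'rV[R]_d]])%E.

Definition linf_norm (d : nat) (u : 'rV[R]_d) : R :=
  \big[Num.max/0]_(j < d) `|u 0 j|.

(* d_inf(u, A) = inf_{a in A} ||u - a||_inf  (+oo if A is empty) *)
Definition d_inf (d : nat) (u : 'rV[R]_d) (A : set 'rV[R]_d) : \bar R :=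
  ereal_inf [set (linf_norm (u - a))%:E | a in A].

Definition eps_separated (d : nat) (Rep : Type) (psi : 'rV[R]_d -> Rep)
    (Gamma : (Y -> R) -> set 'rV[R]_d) (gamma : (Y -> R) -> set Rep) (eps : R) : Prop :=
  forall (u : 'rV[R]_d) (p : Y -> R), simplex p -> ~ gamma p (psi u) -> (eps%:E <= d_inf u (Gamma p))%E.

End Defs.

(* Main.v *)
Require Import Defs.
From HB Require Import structures.
From mathcomp Require Import all_boot all_order all_algebra.
From mathcomp Require Import classical_sets boolp reals constructive_ereal ereal.
From mathcomp Require Import ring lra zify.
Set Implicit Arguments. Unset Strict Implicit. Unset Printing Implicit Defensive.
Import Order.TTheory GRing.Theory Num.Theory.
Local Open Scope ring_scope.

Section FM.
Variable R : realFieldType.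
Definition row_t := ((nat -> R) * R)%type.
Definition evalr (N : nat) (r : row_t) (w : nat -> R) : R :=
  \sum_(j < N) r.1 j * w j + r.2.

Lemma evalr_ext N r w w' : (forall j, (j < N)%N -> w j = w' j) ->
  evalr N r w = evalr N r w'.
Proof.
move=> h; rewrite /evalr; congr (_ + _); apply: eq_bigr => j _.
by rewrite h.
Qed.

Definition upd (w : nat -> R) (N : nat) (t : R) : nat -> R :=
  fun j => if j == N then t else w j.

Lemma evalr_upd N r w t : evalr N.+1 r (upd w N t) = evalr N r w + r.1 N * t.
Proof.
rewrite /evalr big_ord_recr /= /upd eqxx.
have -> : \sum_(i < N) r.1 i * (if (widen_ord (leqnSn N) i : nat) == N then t else w i)
  = \sum_(i < N) r.1 i * w i.
  by apply: eq_bigr => i _ /=; rewrite ltn_eqF.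
by rewrite addrAC.
Qed.

Lemma seq_lb (s : seq R) : exists t, forall x, x \in s -> t <= x.
Proof.
elim: s => [|a s [t ht]]; first by exists 0.
exists (Num.min a t) => x; rewrite inE => /orP [/eqP ->|/ht]; first by rewrite ge_min lexx.
by move=> h; rewrite ge_min h orbT.
Qed.

Lemma seq_max (a : R) (s : seq R) : exists2 t, t \in a :: s & forall x, x \in a :: s -> x <= t.
Proof.
elim: s a => [|b s IH] a; first by exists a => [|x]; rewrite ?inE // => /eqP ->.
have [t ht1 ht2] := IH b.
case: (leP a t) => hat.
  exists t; first by rewrite inE ht1 orbT.
  move=> x; rewrite inE => /orP [/eqP ->//|]; exact: ht2.
exists a; first by rewrite inE eqxx.
move=> x; rewrite inE => /orP [/eqP ->//|/ht2 h]; lra.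
Qed.

Lemma sep_exists (ls us : seq R) : (forall l u, l \in ls -> u \in us -> l <= u) ->
  exists t, (forall l, l \in ls -> l <= t) /\ (forall u, u \in us -> t <= u).
Proof.
case: ls => [|a ls] h.
  by have [t ht] := seq_lb us; exists t; split.
have [t ht1 ht2] := seq_max a ls.
by exists t; split => // u hu; apply: h.
Qed.

Lemma seq_pos_lb (s : seq R) : exists2 t, 0 < t & forall x, x \in s -> 0 < x -> t <= x.
Proof.
elim: s => [|a s [t ht0 ht]]; first by exists 1.
case: (ltP 0 a) => ha.
  exists (Num.min a t); first by rewrite lt_min ha ht0.
  move=> x; rewrite inE => /orP [/eqP ->|/ht h]; first by rewrite ge_min lexx.
  by move=> /h hh; rewrite ge_min hh orbT.
exists t => // x; rewrite inE => /orP [/eqP -> h|/ht//]; lra.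
Qed.

Definition comb (N : nat) (rp rn : row_t) : row_t :=
  (fun j => rp.1 N * rn.1 j - rn.1 N * rp.1 j, rp.1 N * rn.2 - rn.1 N * rp.2).

Lemma evalr_comb M N rp rn w :
  evalr M (comb N rp rn) w = rp.1 N * evalr M rn w - rn.1 N * evalr M rp w.
Proof.
rewrite /evalr /comb /=.
rewrite [X in X + _](_ : _ = rp.1 N * (\sum_(i < M) rn.1 i * w i) - rn.1 N * (\sum_(i < M) rp.1 i * w i)).
  ring.
by rewrite !mulr_sumr -sumrB; apply: eq_bigr => i _; rewrite mulrBl !mulrA.
Qed.

Lemma fm_step (N : nat) (sys : seq row_t) : exists sys' : seq row_t,
  forall w, (exists t, forall r, r \in sys -> evalr N.+1 r (upd w N t) <= 0) <->
            (forall r, r \in sys' -> evalr N r w <= 0).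
Proof.
set Z := [seq r <- sys | r.1 N == 0].
set Pos := [seq r <- sys | 0 < r.1 N].
set Neg := [seq r <- sys | r.1 N < 0].
exists (Z ++ [seq comb N rp rn | rp <- Pos, rn <- Neg]) => w; split.
  move=> [t ht] r; rewrite mem_cat => /orP [|/allpairsP [[rp rn] [/= hp hn ->]]].
    rewrite mem_filter => /andP [/eqP h0 hr].
    by have := ht r hr; rewrite evalr_upd h0 mul0r addr0.
  move: hp hn; rewrite !mem_filter => /andP [hp1 hp2] /andP [hn1 hn2].
  have := ht _ hp2; have := ht _ hn2; rewrite !evalr_upd evalr_comb => h1 h2.
  set a := rp.1 N in hp1 h2 *; set b := rn.1 N in hn1 h1 *.
  set Ep := evalr N rp w in h2 *; set En := evalr N rn w in h1 *.
  nra.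
move=> h.
have hsep : forall l u, l \in [seq - evalr N rn w / rn.1 N | rn <- Neg] ->
    u \in [seq - evalr N rp w / rp.1 N | rp <- Pos] -> l <= u.
  move=> l u /mapP [rn hn ->] /mapP [rp hp ->].
  have := h (comb N rp rn); rewrite evalr_comb mem_cat.
  have -> : comb N rp rn \in [seq comb N rp rn | rp <- Pos, rn <- Neg].
    by apply/allpairsP; exists (rp, rn).
  rewrite orbT => /(_ isT).
  move: hp hn; rewrite !mem_filter => /andP [hp1 _] /andP [hn1 _].
  set a := rp.1 N in hp1 *; set b := rn.1 N in hn1 *.
  set Ep := evalr N rp w; set En := evalr N rn w => hc.
  set x := - En / b; set y := - Ep / a.
  have e1 : En = - x * b by rewrite /x; field; lra.
  have e2 : Ep = - y * a by rewrite /y; field; lra.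
  have hab : a * b < 0 by nra.
  nra.
have [t [ht1 ht2]] := sep_exists hsep.
exists t => r hr; rewrite evalr_upd.
case: (ltgtP (r.1 N) 0) => hs.
- have hn : r \in Neg by rewrite mem_filter hs hr.
  have := ht1 _ (map_f (fun rn => - evalr N rn w / rn.1 N) hn).
  set x := - evalr N r w / r.1 N => hx.
  have e1 : evalr N r w = - x * r.1 N by rewrite /x; field; lra.
  nra.
- have hn : r \in Pos by rewrite mem_filter hs hr.
  have := ht2 _ (map_f (fun rn => - evalr N rn w / rn.1 N) hn).
  set x := - evalr N r w / r.1 N => hx.
  have e1 : evalr N r w = - x * r.1 N by rewrite /x; field; lra.
  nra.
- have hz : r \in Z by rewrite mem_filter hs eqxx hr.
  have := h r; rewrite mem_cat hz /= => /(_ isT).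
  rewrite hs mul0r addr0 //.
Qed.

Definition agree (n : nat) (w z : nat -> R) := forall j, (j < n)%N -> w j = z j.

Lemma fm (n k : nat) (sys : seq row_t) : exists sys' : seq row_t,
  forall z, (exists w, agree n w z /\ forall r, r \in sys -> evalr (n + k) r w <= 0) <->
            (forall r, r \in sys' -> evalr n r z <= 0).
Proof.
elim: k sys => [|k IH] sys.
  exists sys => z; rewrite addn0; split.
    move=> [w [hw h]] r hr; rewrite -(evalr_ext r hw); exact: h.
  by move=> h; exists z; split.
have [sys1 h1] := fm_step (n + k) sys.
have [sys' h'] := IH sys1.
exists sys' => z; rewrite -h'; split.
  move=> [w [hw h]]; exists w; split => //.
  apply/h1; exists (w (n + k)) => r hr.
  rewrite -(_ : w = upd w (n + k) (w (n + k))).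
    by rewrite -addnS; apply: h.
  by apply: funext => j; rewrite /upd; case: eqP => // ->.
move=> [w [hw /h1 [t ht]]]; exists (upd w (n + k) t); split.
  move=> j hj; rewrite /upd ifF; first exact: hw.
  by apply/negbTE; rewrite neq_ltn (leq_trans hj) // leq_addr.
by move=> r hr; rewrite addnS; apply: ht.
Qed.

End FM.

Section Lin.
Variable R : realType.
Variable d : nat.
Definition lin (a u : 'rV[R]_d) : R := \sum_(j < d) a 0 j * u 0 j.
Definition coef (o : nat) (a : 'rV[R]_d) : nat -> R :=
  fun j => \sum_(i < d) (if j == (o + i)%N then a 0 i else 0).
Definition dec (o : nat) (w : nat -> R) : 'rV[R]_d := \row_i w (o + i)%N.

Lemma sum_single N x (c : R) (w : nat -> R) : (x < N)%N ->
  \sum_(j < N) ((if (j : nat) == x then c else 0) * w j) = c * w x.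
Proof.
move=> hx; rewrite (bigD1 (Ordinal hx)) //= eqxx big1 ?addr0 // => j hj.
by rewrite ifF ?mul0r //; apply/negbTE; apply: contra hj => /eqP h; apply/eqP/val_inj.
Qed.

Lemma sum_coef N o a (w : nat -> R) : (o + d <= N)%N ->
  \sum_(j < N) coef o a j * w j = \sum_(i < d) a 0 i * w (o + i)%N.
Proof.
move=> hN; rewrite /coef.
under eq_bigr do rewrite mulr_suml.
rewrite exchange_big /=; apply: eq_bigr => i _.
rewrite sum_single //; apply: leq_trans hN; by rewrite ltn_add2l.
Qed.

Lemma lin_dec o a w : lin a (dec o w) = \sum_(i < d) a 0 i * w (o + i)%N.
Proof. by apply: eq_bigr => i _; rewrite mxE. Qed.

Definition ext (o : nat) (u : 'rV[R]_d) : nat -> R :=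
  fun j => \sum_(i < d) (if j == (o + i)%N then u 0 i else 0).

Lemma ext_at o u (i : 'I_d) : ext o u (o + i) = u 0 i.
Proof.
rewrite /ext (bigD1 i) //= eqxx big1 ?addr0 // => j hj; rewrite ifF //; apply/negbTE.
by rewrite eqn_add2l; apply: contra hj => /eqP h; apply/eqP/val_inj.
Qed.

Lemma ext_lt o u j : (j < o)%N -> ext o u j = 0.
Proof.
move=> h; apply: big1 => i _; rewrite ifF //; apply/negbTE.
by apply: contraTN h => /eqP ->; rewrite -ltnNge leq_addr.
Qed.

Lemma ext_ge o u j : (o + d <= j)%N -> ext o u j = 0.
Proof.
move=> h; apply: big1 => i _; rewrite ifF //; apply/negbTE.
apply: contraTN h => /eqP ->; rewrite -ltnNge ltn_add2l //.
Qed.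

End Lin.
Arguments dec {R d} o w.

Section Poly1.
Variable R : realType.

Lemma poly1_min (rs : seq (R * R)) t0 :
  (forall r, r \in rs -> r.1 * t0 + r.2 <= 0) ->
  (forall t, (forall r, r \in rs -> r.1 * t + r.2 <= 0) -> 0 <= t) ->
  exists m, (forall r, r \in rs -> r.1 * m + r.2 <= 0) /\
            forall t, (forall r, r \in rs -> r.1 * t + r.2 <= 0) -> m <= t.
Proof.
move=> h0 hb.
set ls := [seq - r.2 / r.1 | r <- rs & r.1 < 0].
have inls r : r \in rs -> r.1 < 0 -> - r.2 / r.1 \in ls.
  by move=> hr hn; apply: map_f; rewrite mem_filter hn hr.
case E: ls => [|a s].
  exfalso.
  have := hb (Num.min t0 (-1)).
  have hle : Num.min t0 (-1) <= t0 by rewrite ge_min lexx.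
  have hle2 : Num.min t0 (-1) <= -1 by rewrite ge_min lexx orbT.
  suff H : forall r, r \in rs -> r.1 * Num.min t0 (-1) + r.2 <= 0.
    by move=> /(_ H); lra.
  move=> r hr; have := h0 r hr; case: (ltgtP r.1 0) => hs.
  - by have := inls r hr hs; rewrite E.
  - nra.
  - by rewrite hs !mul0r.
have [m hm1 hm2] := seq_max a s.
rewrite -E in hm1 hm2; clear E s a.
move: hm1 => /mapP [rs0 hrs0 hmE]; move: hrs0; rewrite mem_filter => /andP [hneg hin].
have hmt : forall t : R, (forall r, r \in rs -> r.1 * t + r.2 <= 0) -> m <= t.
  move=> t ht; have := ht rs0 hin.
  have e1 : rs0.2 = - m * rs0.1 by rewrite hmE; field; lra.
  nra.
exists m; split => // r hr.
have hmt0 := hmt _ h0.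
have := h0 r hr; case: (ltgtP r.1 0) => hs.
- have := hm2 _ (inls r hr hs).
  set x := - r.2 / r.1 => hx.
  have e1 : r.2 = - x * r.1 by rewrite /x; field; lra.
  nra.
- nra.
- by rewrite hs !mul0r.
Qed.
End Poly1.

Section Attain.
Variable R : realType.
Variables (d : nat) (K : finType) (c : K -> 'rV[R]_d) (e : K -> R) (f : 'rV[R]_d -> R).
Hypothesis hf : forall u t, f u <= t <-> forall k, lin (c k) u + e k <= t.
Hypothesis f0 : forall u, 0 <= f u.

Definition att_row (k : K) : row_t R :=
  (fun j => - (if j == 0%N then 1 else 0) + coef 1 (c k) j, e k).

Lemma eval_att_row k w :
  evalr (1 + d) (att_row k) w = - w 0%N + lin (c k) (dec 1 w) + e k.
Proof.
rewrite /evalr /att_row /=.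
under eq_bigr do rewrite mulrDl.
rewrite big_split /= sum_coef // lin_dec.
under eq_bigr do rewrite mulNr.
by rewrite sumrN sum_single // mul1r.
Qed.

Lemma attain : exists v, forall u, f v <= f u.
Proof.
have [sys' hs] := fm 1 d [seq att_row k | k <- enum K].
have HT t : (forall r, r \in sys' -> evalr 1 r (fun _ => t) <= 0) <-> exists u, f u <= t.
  rewrite -hs; split.
    move=> [w [hw h]]; exists (dec 1 w); apply/hf => k.
    have := h _ (map_f att_row (mem_enum K k)).
    rewrite eval_att_row (hw 0%N) //; lra.
  move=> [u /hf hu].
  exists (fun j => (if j == 0%N then t else 0) + ext 1 u j); split.
    by move=> j; rewrite ltnS leqn0 => /eqP ->; rewrite eqxx ext_lt // addr0.
  move=> r /mapP [k _ ->]; rewrite eval_att_row eqxx ext_lt // addr0.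
  have -> : dec 1 (fun j => (if j == 0%N then t else 0) + ext 1 u j) = u.
    by apply/rowP => i; rewrite mxE add1n /= ext_at add0r.
  have := hu k; lra.
have evalr1 r t : evalr 1 r (fun _ => t) = r.1 0%N * t + r.2.
  by rewrite /evalr big_ord1.
set rows := [seq (r.1 0%N, r.2) | r <- sys'].
have H1 : forall r, r \in rows -> r.1 * f 0 + r.2 <= 0.
  move=> r /mapP [r' hr' ->] /=; rewrite -evalr1.
  by move: r' hr'; apply/HT; exists 0.
have H2 : forall t, (forall r, r \in rows -> r.1 * t + r.2 <= 0) -> 0 <= t.
  move=> t ht; have [u hu] : exists u, f u <= t.
    apply/HT => r hr; rewrite evalr1; exact: (ht (r.1 0%N, r.2) (map_f _ hr)).
  exact: le_trans (f0 u) hu.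
have [m [hm1 hm2]] := poly1_min H1 H2.
have [v hv] : exists u, f u <= m.
  apply/HT => r hr; rewrite evalr1; exact: (hm1 (r.1 0%N, r.2) (map_f _ hr)).
exists v => u; apply: le_trans hv _; apply: hm2 => r /mapP [r' hr' ->] /=.
rewrite -evalr1; move: r' hr'; apply/HT; exists u; exact: lexx.
Qed.
End Attain.

Section Lin2.
Variable R : realType.

Lemma lin2 (rs : seq (R * R * R)) (m z0 : R) :
  (forall r, r \in rs -> r.1.1 * m + r.1.2 * z0 + r.2 <= 0) ->
  (forall z, (forall r, r \in rs -> r.1.1 * m + r.1.2 * z + r.2 <= 0) -> z <= 0) ->
  exists k, 0 <= k /\ forall t z, (forall r, r \in rs -> r.1.1 * t + r.1.2 * z + r.2 <= 0) ->
     m <= t -> z <= k * (t - m).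
Proof.
move=> h0 hz.
have hz0 : z0 <= 0 by apply: hz.
have [[r [hr [ha1 hg]]]|hn] := pselect (exists r, r \in rs /\ 0 < r.1.2 /\ 0 <= r.1.1 * m + r.2).
  exists (`|r.1.1| / r.1.2); split; first by apply: divr_ge0 => //; apply: ltW.
  move=> t z ht hmt; have := ht r hr.
  set k := `|r.1.1| / r.1.2.
  have ek : `|r.1.1| = k * r.1.2 by rewrite /k; field; lra.
  have := ler_norm (- r.1.1); rewrite normrN => hab.
  nra.
exfalso.
have hneg : forall r, r \in rs -> 0 < r.1.2 -> r.1.1 * m + r.2 < 0.
  move=> r hr ha; rewrite ltNge; apply/negP => hg; apply: hn; exists r; split => //.
have [zeta hz1 hz2] := seq_pos_lb [seq - (r.1.1 * m + r.2) / r.1.2 | r <- rs & 0 < r.1.2].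
suff : zeta <= 0 by lra.
apply: hz => r hr; case: (ltP 0 r.1.2) => ha.
  have hm : - (r.1.1 * m + r.2) / r.1.2 \in [seq - (r.1.1 * m + r.2) / r.1.2 | r <- rs & 0 < r.1.2].
    by apply: map_f; rewrite mem_filter ha hr.
  have hpos : 0 < - (r.1.1 * m + r.2) / r.1.2.
    by apply: divr_gt0 => //; have := hneg r hr ha; lra.
  have := hz2 _ hm hpos.
  set x := - (r.1.1 * m + r.2) / r.1.2 => hx.
  have ex : r.1.1 * m + r.2 = - x * r.1.2 by rewrite /x; field; lra.
  nra.
have := h0 r hr; nra.
Qed.
End Lin2.

Section Sharp.
Variable R : realType.
Variables (d : nat) (K : finType) (c : K -> 'rV[R]_d) (e : K -> R) (f : 'rV[R]_d -> R).
Hypothesis hf : forall u t, f u <= t <-> forall k, lin (c k) u + e k <= t.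
Variables (m : R) (v0 : 'rV[R]_d).
Hypothesis hv0 : f v0 <= m.
Hypothesis hm : forall u, m <= f u.

Definition uvec (i : nat) : nat -> R := fun x => if x == i then 1 else 0.
Lemma sum_unit N i (w : nat -> R) : (i < N)%N -> \sum_(x < N) uvec i x * w x = w i.
Proof. by move=> h; rewrite /uvec sum_single // mul1r. Qed.

Definition zQ (t z : R) : nat -> R := fun x => if x == 0%N then t else if x == 1%N then z else 0.
Lemma evalr_zQ r t z : evalr 2 r (zQ t z) = r.1 0%N * t + r.1 1%N * z + r.2.
Proof. by rewrite /evalr !big_ord_recl big_ord0 /= addr0. Qed.

Lemma row_bound (al : 'rV[R]_d) (ga : R) :
  (forall u, f u <= m -> lin al u + ga <= 0) ->
  exists k, 0 <= k /\ forall u, lin al u + ga <= k * (f u - m).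
Proof.
move=> hag.
pose qT k : row_t R := (fun x => - uvec 0 x + coef 2 (c k) x, e k).
pose qZ : row_t R := (fun x => uvec 1 x - coef 2 al x, - ga).
have eT k w : evalr (2 + d) (qT k) w = - w 0%N + lin (c k) (dec 2 w) + e k.
  rewrite /evalr /=; under eq_bigr do rewrite mulrDl mulNr.
  by rewrite big_split /= sumrN sum_unit // sum_coef // lin_dec.
have eZ w : evalr (2 + d) qZ w = w 1%N - lin al (dec 2 w) - ga.
  rewrite /evalr /=; under eq_bigr do rewrite mulrBl.
  by rewrite sumrB sum_unit // sum_coef // lin_dec.
have [sys' hs] := fm 2 d (qZ :: [seq qT k | k <- enum K]).
have HQ t z : (forall r, r \in sys' -> evalr 2 r (zQ t z) <= 0) <->
              exists u, f u <= t /\ z <= lin al u + ga.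
  rewrite -hs; split.
    move=> [w [hw h]]; exists (dec 2 w); split.
      apply/hf => k; have : qT k \in qZ :: [seq qT k | k <- enum K].
        by rewrite inE (map_f qT (mem_enum K k)) orbT.
      move=> /h.
      by rewrite eT (hw 0%N) // /zQ /=; lra.
    by have := h _ (mem_head _ _); rewrite eZ (hw 1%N) // /zQ /=; lra.
  move=> [u [hu hz]].
  exists (fun x => zQ t z x + ext 2 u x); split.
    by move=> j hj; rewrite ext_lt // addr0.
  have hd : dec 2 (fun x => zQ t z x + ext 2 u x) = u.
    by apply/rowP => i; rewrite mxE ext_at /zQ /= add0r.
  move=> r; rewrite inE => /orP [/eqP ->|/mapP [k _ ->]].
    by rewrite eZ hd /zQ /= ext_lt // addr0; lra.
  rewrite eT hd /zQ /= ext_lt // addr0; have := (hf u t).1 hu k; lra.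
set rs := [seq (r.1 0%N, r.1 1%N, r.2) | r <- sys'].
have H1 : forall r, r \in rs -> r.1.1 * m + r.1.2 * (lin al v0 + ga) + r.2 <= 0.
  move=> r /mapP [r' hr' ->] /=; rewrite -evalr_zQ; move: r' hr'.
  by apply/HQ; exists v0; split.
have H2 : forall z, (forall r, r \in rs -> r.1.1 * m + r.1.2 * z + r.2 <= 0) -> z <= 0.
  move=> z hz; have [u [hu1 hu2]] : exists u, f u <= m /\ z <= lin al u + ga.
    apply/HQ => r hr; rewrite evalr_zQ; exact: (hz (r.1 0%N, r.1 1%N, r.2) (map_f _ hr)).
  exact: le_trans hu2 (hag _ hu1).
have [k [hk0 hk]] := lin2 H1 H2.
exists k; split => // u; apply: hk (hm u) => r /mapP [r' hr' ->] /=.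
rewrite -evalr_zQ; move: r' hr'; apply/HQ; exists u; split => //.
Qed.

Lemma linf_ge (u : 'rV[R]_d) j : `|u 0 j| <= linf_norm u.
Proof. rewrite /linf_norm; exact: le_bigmax. Qed.

Lemma linf_le (u : 'rV[R]_d) x : 0 <= x -> (forall j, `|u 0 j| <= x) -> linf_norm u <= x.
Proof. move=> h0 h; rewrite /linf_norm; exact: bigmax_le. Qed.

Definition zP (u : 'rV[R]_d) (s : R) : nat -> R :=
  fun x => ext 0 u x + (if x == d then s else 0).

Lemma zP_lt u s (j : 'I_d) : zP u s j = u 0 j.
Proof. by rewrite /zP (ltn_eqF (ltn_ord j)) addr0; have := ext_at 0 u j; rewrite add0n. Qed.

Lemma zP_d u s : zP u s d = s.
Proof. by rewrite /zP eqxx ext_ge ?add0r. Qed.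

Lemma evalr_zP r u s : evalr d.+1 r (zP u s) = lin (\row_i r.1 i) u + r.1 d * s + r.2.
Proof.
rewrite /evalr big_ord_recr /= zP_d; congr (_ + _ + _).
by apply: eq_bigr => i _; rewrite mxE zP_lt.
Qed.

Lemma sharp (eps : R) : 0 < eps -> exists2 de, 0 < de &
  forall u, (forall v, f v <= m -> eps <= linf_norm (u - v)) -> m + de <= f u.
Proof.
move=> heps.
pose pK k : row_t R := (coef d.+1 (c k), e k - m).
pose pA (j : 'I_d) : row_t R := (fun x => uvec j x - uvec (d.+1 + j) x - uvec d x, 0).
pose pB (j : 'I_d) : row_t R := (fun x => uvec (d.+1 + j) x - uvec j x - uvec d x, 0).
have eK k w : evalr (d.+1 + d) (pK k) w = lin (c k) (dec d.+1 w) + (e k - m).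
  by rewrite /evalr /= sum_coef // lin_dec.
have hj1 (j : 'I_d) : (j < d.+1 + d)%N by have := ltn_ord j; lia.
have hj2 (j : 'I_d) : (d.+1 + j < d.+1 + d)%N by have := ltn_ord j; lia.
have hj3 : (d < d.+1 + d)%N by lia.
have eA j w : evalr (d.+1 + d) (pA j) w = w j - w (d.+1 + j)%N - w d.
  rewrite /evalr /= addr0; under eq_bigr do rewrite !mulrBl.
  by rewrite !sumrB !sum_unit.
have eB j w : evalr (d.+1 + d) (pB j) w = w (d.+1 + j)%N - w j - w d.
  rewrite /evalr /= addr0; under eq_bigr do rewrite !mulrBl.
  by rewrite !sumrB !sum_unit.
have [sysP hs] := fm d.+1 d ([seq pK k | k <- enum K] ++ [seq pA j | j <- enum 'I_d]
                                ++ [seq pB j | j <- enum 'I_d]).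
have HP u s : (forall r, r \in sysP -> evalr d.+1 r (zP u s) <= 0) <->
    exists v, f v <= m /\ forall j, `|u 0 j - v 0 j| <= s.
  rewrite -hs; split.
    move=> [w [hw h]]; exists (dec d.+1 w); split.
      apply/hf => k.
      have h1 : evalr (d.+1 + d) (pK k) w <= 0.
        by apply: h; rewrite !mem_cat (map_f pK) ?mem_enum.
      rewrite eK in h1; lra.
    move=> j.
    have h1 : evalr (d.+1 + d) (pA j) w <= 0.
      by apply: h; rewrite !mem_cat (map_f pA) ?mem_enum ?orbT.
    have h2 : evalr (d.+1 + d) (pB j) w <= 0.
      by apply: h; rewrite !mem_cat (map_f pB) ?mem_enum ?orbT.
    rewrite eA in h1; rewrite eB in h2.
    move: h1 h2; rewrite (hw j) ?(hw d) ?zP_lt ?zP_d // ?ltnS ?(ltnW (ltn_ord j)) // mxE => h1 h2.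
    rewrite ler_norml; apply/andP; split; lra.
  move=> [v [hv hj]]; exists (fun x => zP u s x + ext d.+1 v x); split.
    by move=> j hj0; rewrite ext_lt // addr0.
  have hd : dec d.+1 (fun x => zP u s x + ext d.+1 v x) = v.
    apply/rowP => i; rewrite mxE ext_at /zP ext_ge; last by lia.
    by rewrite ifF ?add0r //; apply/eqP; lia.
  have wj (j : 'I_d) : zP u s j + ext d.+1 v j = u 0 j by rewrite zP_lt ext_lt ?addr0 // ltnS ltnW.
  have wd : zP u s d + ext d.+1 v d = s by rewrite zP_d ext_lt ?addr0.
  have wv (j : 'I_d) : zP u s (d.+1 + j)%N + ext d.+1 v (d.+1 + j)%N = v 0 j.
    by have := congr1 (fun M : 'rV[R]_d => M 0 j) hd; rewrite mxE.
  move=> r; rewrite !mem_cat => /orP [/mapP [k _ ->]|/orP [] /mapP [j _ ->]].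
  - rewrite eK hd; have := (hf v m).1 hv k; lra.
  - rewrite eA wj wd wv; have := hj j; rewrite ler_norml => /andP [] ; lra.
  - rewrite eB wj wd wv; have := hj j; rewrite ler_norml => /andP [] ; lra.
have hk : forall r : row_t R, exists k, 0 <= k /\
    (r \in sysP -> forall u, lin (\row_i r.1 i) u + r.2 <= k * (f u - m)).
  move=> r; case: (pselect (r \in sysP)) => hr; last by exists 0.
  have hag : forall u, f u <= m -> lin (\row_i r.1 i) u + r.2 <= 0.
    move=> u hu; have : exists v, f v <= m /\ forall j, `|u 0 j - v 0 j| <= 0.
      by exists u; split => // j; rewrite subrr normr0.
    move=> /HP /(_ r hr); rewrite evalr_zP mulr0 addr0 //.
  have [k [hk0 hk]] := row_bound hag.
  by exists k; split.
case: (choice hk) => kf hkf.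
have [de hde0 hde] := seq_pos_lb [seq - r.1 d * eps / (2 * (kf r + 1)) | r <- sysP].
exists de => // u far.
have hnot : ~ (forall r, r \in sysP -> evalr d.+1 r (zP u (eps / 2)) <= 0).
  move=> /HP [v [hv hj]]; have := far v hv.
  have : linf_norm (u - v) <= eps / 2.
    apply: linf_le => [|j]; first lra.
    by rewrite !mxE.
  lra.
move/existsNP: hnot => [r /not_implyP [hr /negP]]; rewrite -ltNge evalr_zP => hgt.
have hS : evalr d.+1 r (zP u (linf_norm (u - v0))) <= 0.
  apply: ((proj2 (HP u (linf_norm (u - v0)))) _ r hr); exists v0; split => // j.
  by have := linf_ge (u - v0) j; rewrite !mxE.
rewrite evalr_zP in hS.
have hSe := far v0 hv0.
set a := lin (\row_i r.1 i) u in hgt hS.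
set b := r.1 d in hgt hS.
have hb : b < 0 by nra.
have [hk0 hkb] := hkf r.
have hku := hkb hr u; rewrite -/a in hku.
set k := kf r in hk0 hku.
have hmu := hm u.
have hpos : 0 < - b * eps / (2 * (k + 1)).
  apply: divr_gt0; nra.
have := hde _ (map_f (fun r => - r.1 d * eps / (2 * (kf r + 1))) hr) hpos.
rewrite -/b -/k.
set D := - b * eps / (2 * (k + 1)) => hD.
have eD : D * (2 * (k + 1)) = - b * eps by rewrite /D; field; lra.
nra.
Qed.

End Sharp.

Section Uniform.
Variable R : realType.

Lemma fin_uniform (T : finType) (P : T -> R -> Prop) :
  (forall t, exists e, 0 < e /\ forall e', 0 < e' -> e' <= e -> P t e') ->
  exists e, 0 < e /\ forall t, P t e.
Proof.
move=> h; case: (choice h) => g hg.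
have [e he0 he] := seq_pos_lb [seq g t | t <- enum T].
exists e; split => // t; have [hg0 hgt] := hg t.
by apply: hgt => //; apply: he; [apply: map_f; rewrite mem_enum|].
Qed.

Lemma linf_ge0 d (u : 'rV[R]_d) : 0 <= linf_norm u.
Proof.
rewrite /linf_norm; apply: (big_ind (fun x => 0 <= x)) => //.
by move=> x y hx hy; rewrite le_max hx.
Qed.

Lemma uniform_pieces (d : nat) (Y : finType) (L : 'rV[R]_d -> Y -> R) :
  polyhedral L -> exists N (A : Y -> 'I_N.+1 -> 'rV[R]_d) (B : Y -> 'I_N.+1 -> R),
   forall u y, (forall i, lin (A y i) u + B y i <= L u y) /\
               (exists i, L u y = lin (A y i) u + B y i).
Proof.
move=> [_ hp].
have hc : forall y, exists s : {k : nat & (('I_k.+1 -> 'rV[R]_d) * ('I_k.+1 -> R))%type},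
   forall u, (forall i, lin ((projT2 s).1 i) u + (projT2 s).2 i <= L u y) /\
             (exists i, L u y = lin ((projT2 s).1 i) u + (projT2 s).2 i).
  move=> y; have [k [a [b h]]] := hp y.
  by exists (existT _ k (a, b)).
case: (choice hc) => F hF.
pose N := \max_(y : Y) projT1 (F y).
have hkN y : (projT1 (F y) <= N)%N by apply: leq_bigmax.
pose cl y (i : 'I_N.+1) : 'I_(projT1 (F y)).+1 := inord (minn i (projT1 (F y))).
exists N, (fun y i => (projT2 (F y)).1 (cl y i)), (fun y i => (projT2 (F y)).2 (cl y i)).
move=> u y; have [h1 [j hj]] := hF y u; split.
  by move=> i; apply: h1.
exists (inord j); rewrite hj.
have -> : cl y (inord j) = j.
  have hj' := ltn_ord j; have hN := hkN y.
  apply: val_inj; rewrite /cl /= (@inordK N j); last by lia.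
  rewrite inordK; last by lia.
  by apply/minn_idPl; lia.
by [].
Qed.
End Uniform.

Section Pieces.
Variables (R : realType) (d : nat) (Y : finType) (L : 'rV[R]_d -> Y -> R) (N : nat).
Variables (A : Y -> 'I_N.+1 -> 'rV[R]_d) (B : Y -> 'I_N.+1 -> R).
Hypothesis hAB : forall u y, (forall i, lin (A y i) u + B y i <= L u y) /\
               (exists i, L u y = lin (A y i) u + B y i).
Hypothesis hLnn : forall u y, 0 <= L u y.
Variable p : Y -> R.
Hypothesis hp0 : forall y, 0 <= p y.

Definition fp u := exp_loss L p u.

Lemma lin_comb (a u u' : 'rV[R]_d) s :
  lin a ((1 + s) *: u - s *: u') = (1 + s) * lin a u - s * lin a u'.
Proof.
rewrite /lin !mulr_sumr -sumrB; apply: eq_bigr => j _; rewrite !mxE; ring.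
Qed.

Definition pat u : {set (Y * 'I_N.+1)} :=
  [set x | lin (A x.1 x.2) u + B x.1 x.2 == L u x.1].

Lemma pat_inv u u' : (forall r, fp u <= fp r) -> pat u' = pat u ->
  forall r, fp u' <= fp r.
Proof.
move=> hu hpat.
pose ell y i w := lin (A y i) w + B y i.
pose w s := (1 + s) *: u - s *: u'.
have ellw y i s : ell y i (w s) = (1 + s) * ell y i u - s * ell y i u'.
  by rewrite /ell lin_comb; ring.
pose P (x : Y * 'I_N.+1) s := ell x.1 x.2 (w s) <= (1 + s) * L u x.1 - s * L u' x.1.
have hP : forall x, exists e, 0 < e /\ forall s, 0 < s -> s <= e -> P x s.
  move=> [y i]; rewrite /P /=.
  case: (boolP ((y, i) \in pat u)) => hin.
    have hin' : (y, i) \in pat u' by rewrite hpat.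
    move: hin hin'; rewrite !inE /= => /eqP h1 /eqP h2.
    exists 1; split => // s _ _; rewrite ellw /ell h1 h2 //.
  move: hin; rewrite inE /= => hne.
  have hlt : ell y i u < L u y by rewrite lt_neqAle hne (hAB u y).1.
  have hle' : ell y i u' <= L u' y by apply: (hAB u' y).1.
  set D := L u y - ell y i u; set E := L u' y - ell y i u'.
  exists (D / (E + 1)); split.
    apply: divr_gt0; rewrite /D /E; lra.
  move=> s hs hsD; rewrite ellw.
  have hE : 0 <= E by rewrite /E; lra.
  have : s * (E + 1) <= D.
    by move: hsD; rewrite ler_pdivlMr //; lra.
  rewrite /D /E; nra.
have [s [hs hPs]] := fin_uniform hP.
have hLw y : L (w s) y = (1 + s) * L u y - s * L u' y.
  apply/eqP; rewrite eq_le; apply/andP; split.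
    have [i ->] := (hAB (w s) y).2; exact: (hPs (y, i)).
  have [i hi] := (hAB u y).2.
  have hi' : (y, i) \in pat u' by rewrite hpat inE /= -hi.
  move: hi'; rewrite inE /= => /eqP hi'.
  have := (hAB (w s) y).1 i; rewrite -/(ell y i (w s)) ellw /ell -hi hi' //.
have hfw : fp (w s) = (1 + s) * fp u - s * fp u'.
  rewrite /fp /exp_loss !mulr_sumr -sumrB; apply: eq_bigr => y _.
  rewrite hLw; ring.
have := hu (w s); rewrite hfw => h r.
have : fp u' <= fp u by nra.
move=> h'; exact: le_trans h' (hu r).
Qed.

Definition cK (sg : {ffun Y -> 'I_N.+1}) : 'rV[R]_d := \row_j \sum_y p y * A y (sg y) 0 j.
Definition eK (sg : {ffun Y -> 'I_N.+1}) : R := \sum_y p y * B y (sg y).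

Lemma lin_cK sg u : lin (cK sg) u + eK sg = \sum_y p y * (lin (A y (sg y)) u + B y (sg y)).
Proof.
rewrite /lin /cK /eK.
under eq_bigr do rewrite mxE mulr_suml.
rewrite exchange_big /= -big_split /=; apply: eq_bigr => y _.
rewrite mulrDr mulr_sumr; congr (_ + _); apply: eq_bigr => j _; ring.
Qed.

Lemma hfp u t : fp u <= t <-> forall sg, lin (cK sg) u + eK sg <= t.
Proof.
split.
  move=> h sg; apply: le_trans h; rewrite lin_cK /fp /exp_loss.
  apply: ler_sum => y _; apply: ler_wpM2l => //; exact: (hAB u y).1.
move=> h.
have hc : forall y, exists i, L u y = lin (A y i) u + B y i by move=> y; exact: (hAB u y).2.
case: (choice hc) => g hg.
have := h [ffun y => g y]; rewrite lin_cK.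
have -> : fp u = \sum_y p y * (lin (A y ([ffun y => g y] y)) u + B y ([ffun y => g y] y)).
  by apply: eq_bigr => y _; rewrite ffunE -hg.
by [].
Qed.

Lemma fp_ge0 u : 0 <= fp u.
Proof. by apply: sumr_ge0 => y _; apply: mulr_ge0. Qed.

Definition Mc : R := \sum_y \sum_i \sum_(j < d) `|A y i 0 j|.

Lemma Mc_ge0 : 0 <= Mc.
Proof. by do 3! (apply: sumr_ge0 => ? _). Qed.

Lemma lipschitz u v : \sum_y p y = 1 -> fp u - fp v <= Mc * linf_norm (u - v).
Proof.
move=> hp1.
have hy : forall y, L u y - L v y <= Mc * linf_norm (u - v).
  move=> y; have [i hi] := (hAB u y).2; have hv := (hAB v y).1 i.
  have h1 : L u y - L v y <= \sum_(j < d) `|A y i 0 j| * linf_norm (u - v).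
    rewrite hi; apply: le_trans (_ : lin (A y i) u - lin (A y i) v <= _); first lra.
    rewrite /lin -sumrB; apply: ler_sum => j _.
    rewrite -mulrBr; apply: le_trans (ler_norm _) _; rewrite normrM.
    apply: ler_wpM2l => //; have := linf_ge (u - v) j; rewrite !mxE //.
  apply: le_trans h1 _; rewrite -mulr_suml; apply: ler_wpM2r.
    exact: linf_ge0.
  rewrite /Mc (bigD1 y) //= (bigD1 i) //= -addrA lerDl.
  by apply: addr_ge0; repeat (apply: sumr_ge0 => ? _); exact: normr_ge0.
rewrite /fp /exp_loss -sumrB.
apply: le_trans (_ : \sum_y p y * (Mc * linf_norm (u - v)) <= _).
  by apply: ler_sum => y _; rewrite -mulrBr; apply: ler_wpM2l.
by rewrite -mulr_suml hp1 mul1r.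
Qed.

End Pieces.

Unset Implicit Arguments.
Theorem theorem5 (R : realType) (Y : finType) (d : nat) (Rep : finType)
    (L : 'rV[R]_d -> Y -> R) (l : Rep -> Y -> R) (psi : 'rV[R]_d -> Rep) :
  polyhedral L -> discrete_loss l ->
  (calibrated L psi l <->
   exists eps : R, 0 < eps /\ eps_separated psi (prop L) (prop l) eps).
Proof.
move=> hpoly hl.
have hLnn : forall u y, 0 <= L u y := hpoly.1.
have [N [A [B hAB]]] := uniform_pieces hpoly.
have hmin : forall p, simplex p -> exists v0, forall u, fp L p v0 <= fp L p u.
  move=> p [hp0 hp1]; apply: (@attain _ _ _ (cK A p) (eK B p) (fp L p)).
  - by move=> u t; apply: hfp.
  - by move=> u; apply: fp_ge0.
split.
- move=> hcal.
  have hper : forall p, simplex p -> exists e0, 0 < e0 /\ forall u v,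
      ~ prop l p (psi u) -> prop L p v -> e0 <= linf_norm (u - v).
    move=> p hp; have [v0 hv0] := hmin p hp; set m := fp L p v0.
    have hc := hcal p hp.
    have hAll : (m%:E <= ereal_inf [set (exp_loss L p u)%:E | u in [set: 'rV[R]_d]])%E.
      by apply/ereal_infP => _ [u _ <-]; rewrite lee_fin; exact: hv0.
    have [g [hgm hg]] : exists g, m < g /\ forall u, ~ prop l p (psi u) -> g <= fp L p u.
      move: hc hAll.
      set Bad := ereal_inf [set (exp_loss L p u)%:E | u in [set u | ~ prop l p (psi u)]].
      set All := ereal_inf [set (exp_loss L p u)%:E | u in [set: 'rV[R]_d]].
      move=> hc hAll.
      have hlb u : ~ prop l p (psi u) -> (Bad <= (fp L p u)%:E)%E.
        by move=> hu; apply: ereal_inf_lbound; exists u.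
      case E: Bad hc hlb => [g| |] hc hlb.
      + exists g; split.
          by rewrite -lte_fin; exact: le_lt_trans hAll hc.
        by move=> u hu; have := hlb u hu; rewrite lee_fin.
      + exists (m + 1); split; first lra.
        by move=> u hu; have := hlb u hu.
      + by exfalso; move: hc; rewrite ltNge leNye.
    clear hc hAll; have hM := Mc_ge0 A.
    exists ((g - m) / (Mc A + 1)); split.
      by apply: divr_gt0; lra.
    move=> u v hu hv.
    have hvm : fp L p v <= m := hv v0.
    have hLip := lipschitz hAB (proj1 hp) u v (proj2 hp).
    have hgu := hg u hu.
    have hl0 := linf_ge0 (u - v).
    set k := (g - m) / (Mc A + 1).
    have ek : k * (Mc A + 1) = g - m by rewrite /k; field; lra.
    nra.
  pose kG p : {set {set (Y * 'I_N.+1)}} :=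
    [set P | `[< exists u, pat L A B u = P /\ prop L p u >]].
  pose kg p : {set Rep} := [set r | `[< prop l p r >]].
  have hkG : forall p v, prop L p v <-> pat L A B v \in kG p.
    move=> p v; rewrite inE; split.
      by move=> hv; apply/asboolP; exists v.
    move/asboolP => [u [hpu hu]]; exact: (pat_inv hAB hu (esym hpu)).
  have hkg : forall p r, prop l p r <-> r \in kg p.
    by move=> p r; rewrite inE; split => /asboolP.
  have hU : forall kk : ({set {set (Y * 'I_N.+1)}} * {set Rep})%type,
      exists e, 0 < e /\ forall e', 0 < e' -> e' <= e ->
      (fun kk e => forall p, simplex p -> (kG p, kg p) = kk -> forall u v,
         ~ prop l p (psi u) -> prop L p v -> e <= linf_norm (u - v)) kk e'.
    move=> kk.
    case: (pselect (exists p0, simplex p0 /\ (kG p0, kg p0) = kk)) => [[p0 [hp0 hk0]]|hn].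
      have [e0 [he0 he0']] := hper p0 hp0.
      exists e0; split => // e' he' hee p hp hk u v hu hv.
      apply: le_trans hee _; apply: he0'.
        move=> h0; apply: hu; apply/hkg; move/hkg: h0.
        by rewrite -hk0 in hk; case: hk => _ ->.
      apply/hkG; move/hkG: hv.
      by rewrite -hk0 in hk; case: hk => ->.
    by exists 1; split => // e' _ _ p hp hk; exfalso; apply: hn; exists p.
  have [e [he0 he]] := fin_uniform hU.
  exists e; split => // u p hp hu.
  rewrite /d_inf; apply/ereal_infP => _ [v hv <-]; rewrite lee_fin.
  exact: (he (kG p, kg p) p hp erefl u v hu hv).
- move=> [eps [heps hsep]] p hp.
  have [v0 hv0] := hmin p hp; set m := fp L p v0.
  have hf : forall u t, fp L p u <= t <-> forall sg, lin (cK A p sg) u + eK B p sg <= t.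
    by move=> u t; apply: hfp => //; case: hp.
  have [de hde0 hde] := sharp hf (le_refl m) hv0 heps.
  apply: (@le_lt_trans _ _ m%:E).
    by apply: ereal_inf_lbound; exists v0.
  apply: (@lt_le_trans _ _ (m + de)%:E); first by rewrite lte_fin; lra.
  apply/ereal_infP => _ [u hu <-]; rewrite lee_fin; apply: hde => v hv.
  have hvp : prop L p v := fun r => le_trans hv (hv0 r).
  have h1 := hsep u p hp hu.
  have h2 : (d_inf u (prop L p) <= (linf_norm (u - v))%:E)%E.
    by apply: ereal_inf_lbound; exists v.
  by have := le_trans h1 h2; rewrite lee_fin.
Qed.
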